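(* Let $\mathfrak{G}$ be the Goldman Lie algebra of the closed torus over $\mathbb{Z}$, and define $G_0=\mathfrak{G}$ and $G_r=[\mathfrak{G},G_{r-1}]$ for $r\geq1$. Then the lower central series stabilizes: for every $r\geq 0$, $[\mathfrak{G},G_r]$ equals the $\mathbb{Z}$-submodule spanned by the elements $\gcd(i,j)\,a^ib^j$ for $i,j\in\mathbb{Z}\setminus\{0\}$, together with $n\,a^n$ and $n\,b^n$ for $n\in\mathbb{Z}\setminus\{0\}$.
   Context: Let $T^2=\Sigma_{1,0}$ be the closed oriented torus and $\hat\pi\cong\pi_1(T^2)\cong\mathbb{Z}^2$ its set of free homotopy classes of loops, written $a^ib^j$ with $a,b$ the standard generators. The Goldman bracket ($[\alpha,\beta]=\sum_{p\in\alpha\cap\beta}\epsilon(p)\,\alpha*_p\beta$ over transverse intersection points, extended bilinearly) is given on the torus by $[a^ib^j,a^kb^l]=(il-jk)\,a^{i+k}b^{j+l}$. The Goldman Lie algebra over $\mathbb{Z}$ is $\mathbb{Z}\hat\pi$ with this bracket; $[X,Y]$ denotes the $\mathbb{Z}$-span of brackets of elements of $X$ and $Y$. *)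

(* Defs.v *)
From HB Require Import structures.
From mathcomp Require Import all_boot all_order all_algebra.
From mathcomp Require Import finmap.
From mathcomp Require Import monalg.

Set Implicit Arguments.
Unset Strict Implicit.
Unset Printing Implicit Defensive.

Import GRing.Theory Num.Theory.
Local Open Scope ring_scope.

(* The Z-module Z[pi-hat] for the torus: pi-hat = Z^2, the class a^i b^j is
   encoded by the pair (i, j); the basis element a^i b^j is << (i, j) >>. *)
Definition Goldman := {malg int[(int * int)%type]}.

Definition mon (i j : int) : Goldman := << (i, j) >>.

Definition gbracket (x y : Goldman) : Goldman :=
  \sum_(p <- msupp x) \sum_(q <- msupp y)
     << (x@_p * y@_q * (p.1 * q.2 - p.2 * q.1)) *g (p.1 + q.1, p.2 + q.2) >>.

Definition zspan (P : Goldman -> Prop) (z : Goldman) : Prop :=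
  exists s : seq (int * Goldman),
    (forall c, c \in s -> P c.2) /\ z = \sum_(c <- s) c.1 *: c.2.

Definition brspan (X Y : Goldman -> Prop) : Goldman -> Prop :=
  zspan (fun w => exists x y, X x /\ Y y /\ w = gbracket x y).

Fixpoint lcs (r : nat) : Goldman -> Prop :=
  match r with
  | 0%N => fun _ => True
  | r'.+1 => brspan (fun _ => True) (lcs r')
  end.

Definition stable_span : Goldman -> Prop :=
  zspan (fun w =>
    (exists i j : int, i != 0 /\ j != 0 /\ w = << gcdz i j *g (i, j) >>)
    \/ (exists n : int, n != 0 /\ w = << n *g (n, 0) >>)
    \/ (exists n : int, n != 0 /\ w = << n *g (0, n) >>)).

(* Main.v *)
Require Import Defs.
From HB Require Import structures.
From mathcomp Require Import all_boot all_order all_algebra.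
From mathcomp Require Import finmap.
From mathcomp Require Import monalg.
From mathcomp Require Import ring.

Set Implicit Arguments.
Unset Strict Implicit.
Unset Printing Implicit Defensive.
Import GRing.Theory Num.Theory.
Local Open Scope ring_scope.

Lemma zspan0 P : zspan P 0.
Proof. by exists [::]; split => //; rewrite big_nil. Qed.

Lemma zspan_gen (P : Goldman -> Prop) w : P w -> zspan P w.
Proof.
move=> Pw; exists [:: (1, w)]; split; first by move=> c; rewrite inE => /eqP ->.
by rewrite big_seq1 scale1r.
Qed.

Lemma zspanD P x y : zspan P x -> zspan P y -> zspan P (x + y).
Proof.
move=> [s [Hs ->]] [t [Ht ->]]; exists (s ++ t); split; last by rewrite big_cat.
by move=> c; rewrite mem_cat => /orP [/Hs|/Ht].
Qed.

Lemma zspanZ P (a : int) x : zspan P x -> zspan P (a *: x).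
Proof.
move=> [s [Hs ->]]; exists [seq (a * c.1, c.2) | c <- s]; split.
  by move=> c /mapP [d /Hs Hd ->].
rewrite big_map scaler_sumr; apply: eq_bigr => c _; by rewrite scalerA.
Qed.

Lemma zspan_sum P (I : Type) (s : seq I) (F : I -> Goldman) :
  (forall i, zspan P (F i)) -> zspan P (\sum_(i <- s) F i).
Proof.
move=> H; elim: s => [|i s IH]; first by rewrite big_nil; apply: zspan0.
by rewrite big_cons; apply: zspanD.
Qed.

Lemma zspan_trans (P Q : Goldman -> Prop) z :
  zspan Q z -> (forall w, Q w -> zspan P w) -> zspan P z.
Proof.
move=> [s [Hs ->]] H; elim: s Hs => [|c s IH] Hs; first by rewrite big_nil; apply: zspan0.
rewrite big_cons; apply: zspanD; first by apply: zspanZ; apply: H; apply: Hs; rewrite inE eqxx.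
by apply: IH => d Hd; apply: Hs; rewrite inE Hd orbT.
Qed.

Lemma monZ (q x : int) (k : int * int) : << (q * x) *g k >> = q *: << x *g k >> :> Goldman.
Proof.
apply/malgP => k'; rewrite mcoeffZ !mcoeffU; by case: (k == k'); rewrite ?mulr0.
Qed.

Lemma stable_gen m n k : (gcdz m n %| k)%Z -> stable_span << k *g (m, n) >>.
Proof.
have [->|m0] := eqVneq m 0; have [->|n0] := eqVneq n 0.
- by rewrite gcdz0 /= dvd0z => /eqP ->; rewrite monalgU0; apply: zspan0.
- rewrite gcd0z => H; have /dvdzP [q ->] : (n %| k)%Z by rewrite dvdzE; exact: H.
  rewrite monZ; apply: zspanZ; apply: zspan_gen; right; right; by exists n.
- rewrite gcdz0 => H; have /dvdzP [q ->] : (m %| k)%Z by rewrite dvdzE; exact: H.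
  rewrite monZ; apply: zspanZ; apply: zspan_gen; right; left; by exists m.
- move=> /dvdzP [q ->]; rewrite monZ; apply: zspanZ; apply: zspan_gen; left.
  by exists m, n.
Qed.

Lemma bracket_stable x y : stable_span (gbracket x y).
Proof.
rewrite /gbracket; apply: zspan_sum => p; apply: zspan_sum => q.
apply: stable_gen; apply: dvdz_mull.
have -> : p.1 * q.2 - p.2 * q.1 = p.1 * (p.2 + q.2) - p.2 * (p.1 + q.1) by ring.
by apply: rpredB; apply: dvdz_mull; [apply: dvdz_gcdr | apply: dvdz_gcdl].
Qed.

Lemma gbracket_mon i j m n :
  gbracket (mon i j) (mon m n) = << (i * n - j * m) *g (i + m, j + n) >>.
Proof.
rewrite /gbracket /mon !msuppU oner_eq0 /= big_seq_fset1 big_seq_fset1.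
by rewrite !mcoeffUU /= !mul1r.
Qed.

Lemma genB (Y : Goldman -> Prop) p q k :
  (forall z, stable_span z -> Y z) ->
  (gcdz p q %| k)%Z -> brspan (fun _ => True) Y << k *g (p, q) >>.
Proof.
move=> HY /dvdzP [c ->].
case: (egcdzP p q) => u v Huv cop.
exists [:: (c, gbracket (mon (p + v) (q - u)) (mon (- v) u))]; split.
  move=> d; rewrite inE => /eqP -> /=.
  exists (mon (p + v) (q - u)), (mon (- v) u); split => //; split => //.
  apply: HY; apply: stable_gen.
  have : coprimez (- v) u by rewrite coprimeNz coprimez_sym.
  by move=> /eqP ->; apply: dvdzz.
rewrite big_seq1 /= gbracket_mon -monZ.
have -> : (p + v + - v, q - u + u) = (p, q) by congr pair; ring.
by rewrite -Huv; congr (<< _ *g _ >>); ring.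
Qed.

Lemma key (Y : Goldman -> Prop) :
  (forall z, stable_span z -> Y z) ->
  forall z, brspan (fun _ => True) Y z <-> stable_span z.
Proof.
move=> HY z; split.
  move=> H; apply: (zspan_trans H) => w [x [y [_ [_ ->]]]]; exact: bracket_stable.
move=> H; apply: (zspan_trans H) => w [[i [j [_ [_ ->]]]]|[[n [_ ->]]|[n [_ ->]]]].
- by apply: genB => //; apply: dvdzz.
- apply: genB => //; rewrite gcdz0 dvdzE; exact: dvdnn.
- apply: genB => //; rewrite gcd0z dvdzE; exact: dvdnn.
Qed.

Lemma lcs_big r z : stable_span z -> lcs r z.
Proof.
elim: r z => [|r IH] z H //=.
by apply/(key IH).
Qed.

Theorem mainTheorem5 :
  forall (r : nat) (z : Goldman),
    brspan (fun _ => True) (lcs r) z <-> stable_span z.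
Proof. move=> r; apply: key; exact: lcs_big. Qed.
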